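(* Let $0<t_0\le1/2$, $t\in[t_0,1]$. For every $\ell\in\mathbb Z_+$ and every sufficiently smooth $g$ on $\mathbb T^3\times\mathbb R^3$: if $\ell$ is even then $\|\Lambda^\ell g\|_{(2,0)}^2\le\|M^{\ell/2}g\|_{(2,0)}^2$; if $\ell$ is odd then $$\|\Lambda^\ell g\|_{(2,0)}^2\le\|M^{\ell/2}g\|_{(2,0)}^2\le\|M^{(\ell+1)/2}g\|_{(2,0)}\|M^{(\ell-1)/2}g\|_{(2,0)}.$$
   Context: $(m,\eta)\in\mathbb Z^3\times\mathbb R^3$ are Fourier dual variables of $(x,v)\in\mathbb T^3\times\mathbb R^3$. For $\sigma\ge0$, $M^\sigma$ is the Fourier multiplier with symbol $\big((t-t_0)\eta_1^2+(t-t_0)^2m_1\eta_1+\frac{(t-t_0)^3}{3}m_1^2\big)^\sigma$; $M=M^1=-(t-t_0)\partial_{v_1}^2-(t-t_0)^2\partial_{x_1}\partial_{v_1}-\frac{(t-t_0)^3}{3}\partial_{x_1}^2$. $\Lambda_1=\frac{1}{2\sqrt{-1}}((t-t_0)^{1/2}\partial_{v_1}+(t-t_0)^{3/2}\partial_{x_1})$, $\Lambda_2=\frac{\sqrt3}{6\sqrt{-1}}(3(t-t_0)^{1/2}\partial_{v_1}+(t-t_0)^{3/2}\partial_{x_1})$. For a norm $\|\cdot\|$, $\|\Lambda^\ell g\|:=\big(\sum_{j_1,\dots,j_\ell\in\{1,2\}}\|\Lambda_{j_1}\cdots\Lambda_{j_\ell}g\|^2\big)^{1/2}$. $\|u\|_{(2,0)}^2=\sum_{|\alpha|\le2}\|\partial_x^\alpha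 u\|_{L^2(\mathbb T^3\times\mathbb R^3)}^2$. *)

(* Defs.v *)
From HB Require Import structures.
From mathcomp Require Import all_boot all_order all_algebra.
From mathcomp Require Import all_classical all_reals all_analysis.
From mathcomp Require Import complex.

Set Implicit Arguments. Unset Strict Implicit. Unset Printing Implicit Defensive.
Import Order.TTheory GRing.Theory Num.Theory.
Import numFieldNormedType.Exports.
Local Open Scope classical_set_scope.
Local Open Scope ring_scope.
Local Open Scope complex_scope.

(* Points of R^3 (and of T^3 = (R/2piZ)^3, via 2pi-periodic representatives)
   are triples ((a1, a2), a3); frequencies m in Z^3 are triples of ints. *)
Notation R3 R := ((R * R) * R)%type.
Notation Z3 := ((int * int) * int)%type.
(* Points (x, v) of R^3 x R^3, written as a left-nested 6-tuple
   (((((x1, x2), x3), v1), v2), v3). *)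
Notation R6 R := (((((R * R) * R) * R) * R) * R)%type.

Notation leb3 R := ((@lebesgue_measure R \x @lebesgue_measure R)
                      \x @lebesgue_measure R)%E.
Notation leb6 R := (((((@lebesgue_measure R \x @lebesgue_measure R)
   \x @lebesgue_measure R) \x @lebesgue_measure R) \x @lebesgue_measure R)
   \x @lebesgue_measure R)%E.

Section Defs.
Variable R : realType.

Definition xpart (p : R6 R) : R3 R := (p.1.1.1.1.1, p.1.1.1.1.2, p.1.1.1.2).
Definition vpart (p : R6 R) : R3 R := (p.1.1.2, p.1.2, p.2).

(* fundamental cell [0, 2pi)^3 of the torus T^3 *)
Definition cell : set (R3 R) :=
  (`[0, 2 * pi[%classic `*` `[0, 2 * pi[%classic) `*` `[0, 2 * pi[%classic.

Definition dot3 (a b : R3 R) : R := a.1.1 * b.1.1 + a.1.2 * b.1.2 + a.2 * b.2.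
Definition ofZ3 (m : Z3) : R3 R := (m.1.1%:~R, m.1.2%:~R, m.2%:~R).

Definition expi (th : R) : R[i] := (cos th) +i* (sin th).

(* g : T^3 x R^3 -> C, represented as a function on R^3 x R^3 which is
   2pi-periodic in each x-coordinate *)
Definition periodic_x (g : R3 R -> R3 R -> R[i]) : Prop :=
  forall (x v : R3 R),
    [/\ g (x.1.1 + 2 * pi, x.1.2, x.2) v = g x v,
        g (x.1.1, x.1.2 + 2 * pi, x.2) v = g x v &
        g (x.1.1, x.1.2, x.2 + 2 * pi) v = g x v].

Definition fourier_integrand (g : R3 R -> R3 R -> R[i]) (m : Z3) (eta : R3 R)
  (p : R6 R) : R[i] :=
  g (xpart p) (vpart p) * expi (- (dot3 (ofZ3 m) (xpart p) + dot3 eta (vpart p))).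

Definition fourier (g : R3 R -> R3 R -> R[i]) (m : Z3) (eta : R3 R) : R[i] :=
  (Rintegral (leb6 R) (xpart @^-1` cell)
     (fun p => complex.Re (fourier_integrand g m eta p))) +i*
  (Rintegral (leb6 R) (xpart @^-1` cell)
     (fun p => complex.Im (fourier_integrand g m eta p))).

Definition csq (z : R[i]) : R := complex.Re z ^+ 2 + complex.Im z ^+ 2.

Definition symbol := Z3 -> R3 R -> R[i].
Definition mult (p : symbol) (F : Z3 -> R3 R -> R[i]) : Z3 -> R3 R -> R[i] :=
  fun m eta => p m eta * F m eta.

(* || u ||_{L^2(T^3 x R^3)}^2 of the function u with Fourier transform F,
   given by Plancherel: (2 pi)^-6 sum_m int |F(m,eta)|^2 d eta *)
Definition L2sq (F : Z3 -> R3 R -> R[i]) : \bar R :=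
  (((2 * pi) ^- 6)%:E *
   \esum_(m in [set: Z3]) \int[leb3 R]_eta (csq (F m eta))%:E)%E.

Definition sym_dx1 : symbol := fun m _ => 'i * m.1.1%:~R.
Definition sym_dx2 : symbol := fun m _ => 'i * m.1.2%:~R.
Definition sym_dx3 : symbol := fun m _ => 'i * m.2%:~R.
Definition sym_dv1 : symbol := fun _ eta => 'i * (eta.1.1)%:C.

Definition sym_dxalpha (a : 'I_3 * 'I_3 * 'I_3) : symbol := fun m eta =>
  sym_dx1 m eta ^+ a.1.1 * sym_dx2 m eta ^+ a.1.2 * sym_dx3 m eta ^+ a.2.

Definition norm20sq (F : Z3 -> R3 R -> R[i]) : \bar R :=
  (\sum_(a : 'I_3 * 'I_3 * 'I_3 | (a.1.1 + a.1.2 + a.2 <= 2)%N)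
     L2sq (mult (sym_dxalpha a) F))%E.

(* tau stands for t - t0 *)
(* symbol of M = -tau d_{v1}^2 - tau^2 d_{x1} d_{v1} - tau^3/3 d_{x1}^2 *)
Definition Msym (tau : R) (m : Z3) (eta : R3 R) : R :=
  tau * eta.1.1 ^+ 2 + tau ^+ 2 * m.1.1%:~R * eta.1.1
  + tau ^+ 3 / 3 * m.1.1%:~R ^+ 2.

Definition Mpow_sym (tau sigma : R) : symbol :=
  fun m eta => ((Msym tau m eta) `^ sigma)%:C.

Definition Lam1_sym (tau : R) : symbol := fun m eta =>
  (2 * 'i)^-1 * ((tau `^ (1/2))%:C * sym_dv1 m eta
                 + (tau `^ (3/2))%:C * sym_dx1 m eta).
Definition Lam2_sym (tau : R) : symbol := fun m eta =>
  (Num.sqrt 3)%:C / (6 * 'i) * (3 * (tau `^ (1/2))%:C * sym_dv1 m eta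
                                + (tau `^ (3/2))%:C * sym_dx1 m eta).

Definition Lam_sym (tau : R) (j : 'I_2) : symbol :=
  if j == ord0 then Lam1_sym tau else Lam2_sym tau.

Definition LamPow_norm20sq (tau : R) (l : nat) (g : R3 R -> R3 R -> R[i])
  : \bar R :=
  (\sum_(j : l.-tuple 'I_2)
     norm20sq (foldr (fun k G => mult (Lam_sym tau k) G) (fourier g) j))%E.

Definition Mpow_norm20sq (tau sigma : R) (g : R3 R -> R3 R -> R[i]) : \bar R :=
  norm20sq (mult (Mpow_sym tau sigma) (fourier g)).

End Defs.

(* Main.v *)
Require Import Defs.
From HB Require Import structures.
From mathcomp Require Import all_boot all_order all_algebra.
From mathcomp Require Import all_classical all_reals all_analysis.
From mathcomp Require Import complex ring lra measurable_realfun.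
Import Order.TTheory GRing.Theory Num.Theory.
Local Open Scope classical_set_scope.
Local Open Scope ring_scope.

Section S.
Variable R : realType.
Local Open Scope complex_scope.

Lemma iC_neq0 : ('i : R[i]) != 0.
Proof. by rewrite eq_complex /= oner_eq0 andbF. Qed.

Lemma realC_div_nat (x : R) n : (x / n.+1%:R)%:C = x%:C / n.+1%:R.
Proof.
rewrite rmorphM (rmorphV (real_complex R)) ?unitfE ?pnatr_eq0 //.
by rewrite rmorph_nat.
Qed.

Lemma Lam1E tau (m : Z3) (eta : R3 R) :
  Lam1_sym tau m eta = (((tau `^ (1/2)) * eta.1.1 + (tau `^ (3/2)) * m.1.1%:~R) / 2)%:C.
Proof.
rewrite /Lam1_sym /sym_dv1 /sym_dx1 realC_div_nat.
rewrite rmorphD !rmorphM (rmorph_int (real_complex R)).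
have hi := iC_neq0.
field. exact: hi.
Qed.

Lemma Lam2E tau (m : Z3) (eta : R3 R) :
  Lam2_sym tau m eta = (Num.sqrt 3 * (3 * (tau `^ (1/2)) * eta.1.1 + (tau `^ (3/2)) * m.1.1%:~R) / 6)%:C.
Proof.
rewrite /Lam2_sym /sym_dv1 /sym_dx1 realC_div_nat.
rewrite !rmorphM rmorphD !rmorphM (rmorph_int (real_complex R)) (rmorph_nat (real_complex R)).
have hi := iC_neq0.
field. exact: hi.
Qed.
Lemma csqC (x : R) : csq (x%:C) = x ^+ 2.
Proof. by rewrite /csq /= expr0n /= addr0. Qed.

Lemma csqM (x y : R[i]) : csq (x * y) = csq x * csq y.
Proof. case: x => a b; case: y => c d; rewrite /csq /=. ring. Qed.

Lemma csq_ge0 (x : R[i]) : 0 <= csq x.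
Proof. by rewrite /csq addr_ge0 // sqr_ge0. Qed.

Lemma pow32 (tau : R) : 0 <= tau -> tau `^ (3/2) = (tau `^ (1/2)) ^+ 3.
Proof.
move=> t0; rewrite -powR_mulrn ?powR_ge0 // -powRrM. by congr (_ `^ _); field.
Qed.

Lemma pow12sq (tau : R) : 0 <= tau -> (tau `^ (1/2)) ^+ 2 = tau.
Proof.
move=> t0; rewrite -powR_mulrn ?powR_ge0 // -powRrM.
rewrite (_ : 1/2 * 2%:R = 1); first by rewrite powRr1.
by field.
Qed.

Lemma LamSum tau (m : Z3) (eta : R3 R) : 0 <= tau ->
  csq (Lam1_sym tau m eta) + csq (Lam2_sym tau m eta) = Msym tau m eta.
Proof.
move=> t0; rewrite Lam1E Lam2E !csqC /Msym pow32 //.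
have ht := pow12sq tau t0.
set s := tau `^ (1/2) in ht *; set e := eta.1.1; set M := m.1.1%:~R.
clearbody s; rewrite -{}ht.
have h3 : Num.sqrt 3 ^+ 2 = 3 :> R by rewrite sqr_sqrtr // ler0n.
have hh : forall r X : R, (r * X / 6) ^+ 2 = r ^+ 2 * X ^+ 2 / 36.
  by move=> r X; field.
by rewrite hh h3; field.
Qed.
Lemma sum_tuple_prod (l : nat) (c : 'I_2 -> R) :
  \sum_(j : l.-tuple 'I_2) \prod_(k <- j) c k = (\sum_k c k) ^+ l.
Proof.
elim: l => [|l IH].
  rewrite expr0 (big_pred1 [tuple]) ?big_nil // => t.
  by apply/esym/eqP; exact: tuple0.
rewrite (reindex (fun p : 'I_2 * l.-tuple 'I_2 => cons_tuple p.1 p.2)) /=; last first.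
  exists (fun t => (thead t, behead_tuple t)) => [[k t] _ | t _].
    by congr pair; apply: val_inj.
  by rewrite [RHS]tuple_eta.
rewrite -(pair_big xpredT xpredT (fun i (j : l.-tuple 'I_2) => \prod_(k <- cons_tuple i j) c k)) /=.
under eq_bigr => i _ do under eq_bigr => j _ do rewrite big_cons.
under eq_bigr => i _ do rewrite -mulr_sumr IH.
by rewrite -mulr_suml exprS mulrC.
Qed.
Local Open Scope ereal_scope.

Definition c6 : R := ((2 * pi) ^- 6)%R.
Lemma c6_ge0 : (0 <= c6)%R.
Proof. by rewrite /c6 invr_ge0 exprn_ge0 // mulr_ge0 // pi_ge0. Qed.

Definition Q (F : Z3 -> R3 R -> R[i]) (w : Z3 -> R3 R -> R) : \bar R :=
  \sum_(a : 'I_3 * 'I_3 * 'I_3 | (a.1.1 + a.1.2 + a.2 <= 2)%N)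
     (c6%:E * \esum_(m in [set: Z3]) \int[leb3 R]_eta
        (csq (sym_dxalpha a m eta) * w m eta * csq (F m eta))%:E).

Definition goodw (w : Z3 -> R3 R -> R) :=
  (forall m eta, 0 <= w m eta)%R /\ (forall m, measurable_fun setT (w m)).

Lemma normQ F P : norm20sq (mult P F) = Q F (fun m eta => csq (P m eta)).
Proof.
apply: eq_bigr => a _; rewrite /L2sq; congr (_ * _).
apply: eq_esum => m _; apply: eq_integral => eta _.
by rewrite /mult !csqM mulrA.
Qed.

Lemma esumZ_le (T : choiceType) (S : set T) (c : R) (a : T -> \bar R) :
  (forall i, 0 <= a i) -> (0 <= c)%R ->
  \esum_(i in S) (c%:E * a i) <= c%:E * \esum_(i in S) a i.
Proof.
move=> a0 c0; apply: ge_ereal_sup => _ [X [finX XS] <-].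
rewrite fsbig_finite // -ge0_sume_distrr //.
apply: lee_wpmul2l; first by rewrite lee_fin.
rewrite -fsbig_finite //; apply: esum_ge; by exists X.
Qed.

Section QF.
Variable F : Z3 -> R3 R -> R[i].
Hypothesis hF : forall m, measurable_fun setT (fun eta => csq (F m eta)).

Lemma integrand_meas a w m : goodw w ->
  measurable_fun setT (fun eta => (csq (sym_dxalpha a m eta) * w m eta * csq (F m eta))%R).
Proof.
move=> [_ hw].
apply: measurable_funM => //; apply: measurable_funM => //.
have -> : (fun x : R3 R => csq (sym_dxalpha a m x)) = fun _ => csq (sym_dxalpha a m (0%R, 0%R, 0%R)) by [].
exact: measurable_cst.
Qed.

Lemma integrand_ge0 a w m eta : goodw w ->
  0 <= (csq (sym_dxalpha a m eta) * w m eta * csq (F m eta))%:E.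
Proof.
by move=> [h _]; rewrite lee_fin !mulr_ge0 // csq_ge0.
Qed.

Lemma inner_ge0 a w m : goodw w ->
  0 <= \int[leb3 R]_eta (csq (sym_dxalpha a m eta) * w m eta * csq (F m eta))%:E.
Proof. by move=> hw; apply: integral_ge0 => eta _; exact: integrand_ge0. Qed.

Lemma esum_ge0' a w : goodw w ->
  0 <= \esum_(m in [set: Z3]) \int[leb3 R]_eta (csq (sym_dxalpha a m eta) * w m eta * csq (F m eta))%:E.
Proof. by move=> hw; apply: esum_ge0 => m _; exact: inner_ge0. Qed.

Lemma Q_ge0 w : goodw w -> 0 <= Q F w.
Proof.
move=> hw; apply: sume_ge0 => a _; apply: mule_ge0; first by rewrite lee_fin c6_ge0.
exact: esum_ge0'.
Qed.

Lemma goodwD w1 w2 : goodw w1 -> goodw w2 -> goodw (fun m eta => w1 m eta + w2 m eta)%R.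
Proof.
move=> [p1 m1] [p2 m2]; split; first by move=> m eta; rewrite addr_ge0.
by move=> m; apply: measurable_funD.
Qed.

Lemma QD w1 w2 : goodw w1 -> goodw w2 ->
  Q F (fun m eta => w1 m eta + w2 m eta)%R = Q F w1 + Q F w2.
Proof.
move=> h1 h2; rewrite /Q -big_split; apply: eq_bigr => a _ /=.
rewrite -ge0_muleDr; [|exact: esum_ge0'|exact: esum_ge0'].
congr (_ * _); rewrite -esumD; [|by move=> m _; exact: inner_ge0|by move=> m _; exact: inner_ge0].
apply: eq_esum => m _; rewrite -ge0_integralD //.
- by apply: eq_integral => eta _; rewrite -EFinD; congr EFin; ring.
- by move=> eta _; exact: integrand_ge0.
- by apply/measurable_EFinP; exact: integrand_meas.
- by move=> eta _; exact: integrand_ge0.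
- by apply/measurable_EFinP; exact: integrand_meas.
Qed.

Lemma Qle w1 w2 : goodw w1 -> goodw w2 -> (forall m eta, w1 m eta <= w2 m eta)%R ->
  Q F w1 <= Q F w2.
Proof.
move=> h1 h2 hle; apply: lee_sum => a _.
apply: lee_wpmul2l; first by rewrite lee_fin c6_ge0.
apply: le_esum => m _; apply: ge0_le_integral => //.
- by move=> eta _; exact: integrand_ge0.
- by apply/measurable_EFinP; exact: integrand_meas.
- by apply/measurable_EFinP; exact: integrand_meas.
move=> eta _; rewrite lee_fin ler_wpM2r ?csq_ge0 // ler_wpM2l ?csq_ge0 //.
Qed.

Lemma QZ_le w c : goodw w -> (0 <= c)%R ->
  Q F (fun m eta => c * w m eta)%R <= c%:E * Q F w.
Proof.
move=> hw c0; rewrite /Q ge0_sume_distrr; last first.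
  by move=> a _; apply: mule_ge0; [rewrite lee_fin c6_ge0|exact: esum_ge0'].
apply: lee_sum => a _; rewrite [leRHS]muleCA; apply: lee_wpmul2l; first by rewrite lee_fin c6_ge0.
eapply le_trans; last first.
  apply: esumZ_le => //; by move=> m; exact: inner_ge0.
  apply: le_esum => m _.
  have -> : (fun eta => (csq (sym_dxalpha a m eta) * (c * w m eta) * csq (F m eta))%:E)
     = (fun eta => c%:E * (csq (sym_dxalpha a m eta) * w m eta * csq (F m eta))%:E).
    by apply/funext => eta; rewrite -EFinM; congr EFin; ring.
  rewrite ge0_integralZl //.
  - by apply/measurable_EFinP; exact: integrand_meas.
  - by move=> eta _; exact: integrand_ge0.
Qed.

Lemma Q0 : Q F (fun _ _ => 0%R) = 0.
Proof.
rewrite /Q big1 // => a _; rewrite esum1 ?mule0 // => m _.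
by apply: integral0_eq => eta _; rewrite mulr0 mul0r.
Qed.

Lemma goodw_sum I (s : seq I) (w : I -> Z3 -> R3 R -> R) :
  (forall j, goodw (w j)) -> goodw (fun m eta => \sum_(j <- s) w j m eta)%R.
Proof.
move=> hw; elim: s => [|j s IH].
  split; first by move=> m eta; rewrite big_nil.
  move=> m; rewrite (_ : (fun eta => _) = fun _ => 0%R); first exact: measurable_cst.
  by apply/funext => eta; rewrite big_nil.
have -> : (fun m eta => \sum_(k <- j :: s) w k m eta)%R =
          (fun m eta => w j m eta + \sum_(k <- s) w k m eta)%R.
  by apply/funext => m; apply/funext => eta; rewrite big_cons.
exact: goodwD.
Qed.

Lemma Qsum I (s : seq I) (w : I -> Z3 -> R3 R -> R) :
  (forall j, goodw (w j)) ->
  Q F (fun m eta => \sum_(j <- s) w j m eta)%R = \sum_(j <- s) Q F (w j).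
Proof.
move=> hw; elim: s => [|j s IH].
  rewrite big_nil -Q0; congr Q; apply/funext => m; apply/funext => eta.
  by rewrite big_nil.
have -> : (fun m eta => \sum_(k <- j :: s) w k m eta)%R =
          (fun m eta => w j m eta + \sum_(k <- s) w k m eta)%R.
  by apply/funext => m; apply/funext => eta; rewrite big_cons.
by rewrite QD // ?IH ?big_cons //; exact: goodw_sum.
Qed.
End QF.
Local Close Scope ereal_scope.

Lemma meas_e11 (h : R -> R) : measurable_fun setT h ->
  measurable_fun setT (fun eta : R3 R => h eta.1.1).
Proof.
move=> mh; apply: (measurableT_comp mh).
exact: (measurableT_comp measurable_fst measurable_fst).
Qed.

Lemma meas_aff2 (a b d : R) : measurable_fun setT (fun x : R => ((a * x + b) / d) ^+ 2).
Proof.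
apply: measurable_funX; apply: measurable_funM; last exact: measurable_cst.
apply: measurable_funD; last exact: measurable_cst.
by apply: measurable_funM; [exact: measurable_cst|exact: measurable_id].
Qed.

Lemma goodw1 : goodw (fun _ _ => 1).
Proof. by split => // m; exact: measurable_cst. Qed.

Lemma goodwM w1 w2 : goodw w1 -> goodw w2 -> goodw (fun m eta => w1 m eta * w2 m eta).
Proof.
move=> [p1 m1] [p2 m2]; split; first by move=> m eta; rewrite mulr_ge0.
by move=> m; apply: measurable_funM.
Qed.

Lemma goodwLam tau k : 0 <= tau -> goodw (fun m eta => csq (Lam_sym tau k m eta)).
Proof.
move=> t0; split; first by move=> *; exact: csq_ge0.
move=> m; rewrite /Lam_sym; case: ifP => _.
  have -> : (fun eta => csq (Lam1_sym tau m eta)) =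
     (fun x : R3 R => ((tau `^ (1/2) * x.1.1 + tau `^ (3/2) * m.1.1%:~R) / 2) ^+ 2).
    by apply/funext => x; rewrite Lam1E csqC.
  exact: (meas_e11 _ (meas_aff2 (tau `^ (1/2)) (tau `^ (3/2) * m.1.1%:~R) 2)).
have -> : (fun eta => csq (Lam2_sym tau m eta))
  = (fun x : R3 R => ((Num.sqrt 3 * (3 * tau `^ (1 / 2)) * x.1.1 + Num.sqrt 3 * (tau `^ (3 / 2) * m.1.1%:~R)) / 6) ^+ 2).
  by apply/funext => x; rewrite Lam2E csqC; congr (_ ^+ 2); ring.
exact: (meas_e11 _ (meas_aff2 (Num.sqrt 3 * (3 * tau `^ (1 / 2))) (Num.sqrt 3 * (tau `^ (3 / 2) * m.1.1%:~R)) 6)).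
Qed.

Lemma goodw_prod tau (s : seq 'I_2) : 0 <= tau ->
  goodw (fun m eta => \prod_(k <- s) csq (Lam_sym tau k m eta)).
Proof.
move=> t0; elim: s => [|k s IH].
  have -> : (fun m eta => \prod_(k <- [::]) csq (Lam_sym tau k m eta)) = (fun _ _ => 1).
    by apply/funext => m; apply/funext => eta; rewrite big_nil.
  exact: goodw1.
have -> : (fun m eta => \prod_(j <- k :: s) csq (Lam_sym tau j m eta)) =
   (fun m eta => csq (Lam_sym tau k m eta) * \prod_(j <- s) csq (Lam_sym tau j m eta)).
  by apply/funext => m; apply/funext => eta; rewrite big_cons.
by apply: goodwM => //; exact: goodwLam.
Qed.

Lemma Msym_ge0 (tau : R) m eta : 0 <= tau -> 0 <= Msym tau m eta.
Proof. by move=> t0; rewrite -LamSum // addr_ge0 // csq_ge0. Qed.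

Lemma goodwM_pow (tau sigma : R) : 0 <= tau ->
  goodw (fun m eta => csq (Mpow_sym tau sigma m eta)).
Proof.
move=> t0; split; first by move=> *; exact: csq_ge0.
move=> m.
have -> : (fun eta => csq (Mpow_sym tau sigma m eta)) =
  (fun x : R3 R => (fun y => ((tau * y ^+ 2 + tau ^+ 2 * m.1.1%:~R * y + tau ^+ 3 / 3 * m.1.1%:~R ^+ 2) `^ sigma) ^+ 2) x.1.1).
  by apply/funext => x; rewrite /Mpow_sym csqC.
apply: (meas_e11 (fun y : R => ((tau * y ^+ 2 + tau ^+ 2 * m.1.1%:~R * y + tau ^+ 3 / 3 * m.1.1%:~R ^+ 2) `^ sigma) ^+ 2)).
apply: measurable_funX; apply: (measurableT_comp (measurable_powR _)).
apply: measurable_funD; last exact: measurable_cst.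
apply: measurable_funD.
  apply: measurable_funM; first exact: measurable_cst.
  by apply: measurable_funX; exact: measurable_id.
apply: measurable_funM; first exact: measurable_cst.
exact: measurable_id.
Qed.

Lemma foldr_Lam tau (j : seq 'I_2) (F : Z3 -> R3 R -> R[i]) :
  foldr (fun k G => mult (Lam_sym tau k) G) F j =
  mult (fun m eta => \prod_(k <- j) Lam_sym tau k m eta) F.
Proof.
elim: j => [|k j IH] /=; apply/funext => m; apply/funext => eta.
  by rewrite /mult big_nil mul1r.
by rewrite IH /mult big_cons mulrA.
Qed.

Lemma csq_prod (s : seq 'I_2) (f : 'I_2 -> R[i]) :
  csq (\prod_(k <- s) f k) = \prod_(k <- s) csq (f k).
Proof.
elim: s => [|k s IH]; first by rewrite !big_nil /csq /= expr0n /= addr0 expr1n.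
by rewrite !big_cons csqM IH.
Qed.

Lemma powhalf_sq (x : R) n : 0 <= x -> (x `^ (n%:R / 2)) ^+ 2 = x ^+ n.
Proof.
move=> x0; rewrite -powR_mulrn ?powR_ge0 // -powRrM.
rewrite (_ : n%:R / 2 * 2%:R = n%:R); first by rewrite powR_mulrn.
by field.
Qed.

Lemma cs_real (X A B : R) : 0 <= X -> 0 <= A -> 0 <= B ->
  (forall lam, 0 < lam -> X <= lam / 2 * A + lam^-1 / 2 * B) ->
  X <= Num.sqrt A * Num.sqrt B.
Proof.
move=> X0 A0 B0 H.
have key : X ^+ 2 <= A * B.
  case: (eqVneq X 0) => [->|Xn0]; first by rewrite expr0n mulr_ge0.
  have Xp : 0 < X by rewrite lt_def Xn0 X0.
  case: (eqVneq A 0) => [A00|An0].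
    exfalso.
    have lp : 0 < (B + 1) / X by rewrite divr_gt0 // ltr_wpDl.
    have := H _ lp; rewrite A00 mulr0 add0r invf_div.
    have -> : X / (B + 1) / 2 * B = X * (B / (2 * (B + 1))).
      by field; rewrite gt_eqF // ltr_wpDl.
    have r1 : B / (2 * (B + 1)) < 1.
      by rewrite ltr_pdivrMr ?mulr_gt0 ?ltr_wpDl //; lra.
    move=> h; nra.
  have Ap : 0 < A by rewrite lt_def An0 A0.
  have lp : 0 < X / A by rewrite divr_gt0.
  have := H _ lp.
  have -> : X / A / 2 * A + (X / A)^-1 / 2 * B = (X ^+ 2 + A * B) / (2 * X).
    by field; rewrite Xn0 An0.
  rewrite ler_pdivlMr ?mulr_gt0 //; nra.
rewrite -sqrtrM // -[X]ger0_norm // -sqrtr_sqr ler_sqrt //.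
exact: mulr_ge0.
Qed.
Lemma goodwZ (c : R) w : 0 <= c -> goodw w -> goodw (fun m eta => c * w m eta).
Proof.
move=> c0 hw; apply: (goodwM (fun _ _ => c) w) => //.
Qed.
End S.
Arguments Q {R}.
Arguments goodw {R}.

Theorem lemma4p5 (R : realType) (t0 t : R) (l : nat)
    (g : R3 R -> R3 R -> R[i]) :
  0 < t0 -> t0 <= 1 / 2 -> t0 <= t -> t <= 1 -> (0 < l)%N ->
  (* g is a (sufficiently regular) function on T^3 x R^3 *)
  periodic_x g ->
  (leb6 R).-integrable (@xpart R @^-1` @cell R)
     (fun p => (complex.Re (g (xpart p) (vpart p)))%:E) ->
  (leb6 R).-integrable (@xpart R @^-1` @cell R)
     (fun p => (complex.Im (g (xpart p) (vpart p)))%:E) ->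
  (forall m : Z3, measurable_fun setT (fun eta => complex.Re (fourier g m eta))) ->
  (forall m : Z3, measurable_fun setT (fun eta => complex.Im (fourier g m eta))) ->
  (forall k : nat, (Mpow_norm20sq (t - t0) (k%:R / 2) g < +oo)%E) ->
  (~~ odd l ->
     (LamPow_norm20sq (t - t0) l g <= Mpow_norm20sq (t - t0) (l%:R / 2) g)%E) /\
  (odd l ->
     (LamPow_norm20sq (t - t0) l g <= Mpow_norm20sq (t - t0) (l%:R / 2) g)%E /\
     (Mpow_norm20sq (t - t0) (l%:R / 2) g <=
        sqrte (Mpow_norm20sq (t - t0) (l.+1%:R / 2) g) *
        sqrte (Mpow_norm20sq (t - t0) (l.-1%:R / 2) g))%E).
Proof.
move=> ht0 _ htt0 _ hl _ _ _ hRe hIm hfin.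
have tau0 : 0 <= t - t0 by rewrite subr_ge0.
move: tau0 hfin; set tau := t - t0 => tau0 hfin.
set F := fourier g.
have hF : forall m, measurable_fun setT (fun eta => csq (F m eta)).
  move=> m; rewrite /csq; apply: measurable_funD; apply: measurable_funX.
    exact: hRe.
  exact: hIm.
pose wM (s : R) := fun m eta => csq (Mpow_sym tau s m eta).
have MpE : forall s, Mpow_norm20sq tau s g = Q F (wM s) by move=> s; exact: normQ.
have hw : forall n m eta, wM (n%:R / 2) m eta = Msym tau m eta ^+ n.
  by move=> n m eta; rewrite /wM /Mpow_sym csqC powhalf_sq // Msym_ge0.
have gw : forall s, goodw (wM s) by move=> s; exact: goodwM_pow.
have LamE : LamPow_norm20sq tau l g = Mpow_norm20sq tau (l%:R / 2) g.
  rewrite MpE /LamPow_norm20sq.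
  have hj : forall j : l.-tuple 'I_2,
      norm20sq (foldr (fun k G => mult (Lam_sym tau k) G) F j) =
      Q F (fun m eta => \prod_(k <- j) csq (Lam_sym tau k m eta)).
    move=> j; rewrite foldr_Lam normQ; congr Q.
    by apply/funext => m; apply/funext => eta; exact: csq_prod.
  under eq_bigr => j _ do rewrite hj.
  rewrite -Qsum //; last by move=> j; exact: goodw_prod.
  congr Q; apply/funext => m; apply/funext => eta.
  rewrite hw (@sum_tuple_prod R l (fun k => csq (Lam_sym tau k m eta))).
  by rewrite !big_ord_recl big_ord0 addr0 /Lam_sym /= LamSum.
split => [_|hodd]; first by rewrite LamE.
split; first by rewrite LamE.
have hl1 : l = l.-1.+1 by rewrite prednK.
have key : forall lam, 0 < lam ->
   (Q F (wM (l%:R / 2)%R) <= (lam / 2)%:E * Q F (wM (l.+1%:R / 2)%R)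
                       + (lam^-1 / 2)%:E * Q F (wM (l.-1%:R / 2)%R))%E.
  move=> lam lp.
  have l2 : 0 <= lam / 2 by rewrite divr_ge0 // ltW.
  have li2 : 0 <= lam^-1 / 2 by rewrite divr_ge0 // invr_ge0 ltW.
  have gA := @goodwZ R (lam / 2) (wM (l.+1%:R / 2)) l2 (gw (l.+1%:R / 2)).
  have gB := @goodwZ R (lam^-1 / 2) (wM (l.-1%:R / 2)) li2 (gw (l.-1%:R / 2)).
  apply: (@le_trans _ _ (Q F (fun m eta => lam / 2 * wM (l.+1%:R / 2) m eta
                                 + lam^-1 / 2 * wM (l.-1%:R / 2) m eta))).
    apply: Qle => //; first exact: goodwD.
    move=> m eta; rewrite !hw.
    have x0 := @Msym_ge0 R tau m eta tau0.
    move: (Msym tau m eta) x0 => x x0.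
    have p0 : 0 <= x ^+ l.-1 by rewrite exprn_ge0.
    rewrite {1}hl1 exprSr (_ : l.+1 = l.-1.+2); last by rewrite -hl1.
    rewrite exprSr exprSr.
    have h1 : 0 <= lam / 2 * x ^+ 2 + lam^-1 / 2 - x.
      have -> : lam / 2 * x ^+ 2 + lam^-1 / 2 - x = (lam * x - 1) ^+ 2 / (2 * lam).
        by field; rewrite gt_eqF.
      by rewrite divr_ge0 ?sqr_ge0 // mulr_ge0 // ltW.
    have -> : lam / 2 * (x ^+ l.-1 * x * x) + lam^-1 / 2 * x ^+ l.-1
       = x ^+ l.-1 * (lam / 2 * x ^+ 2 + lam^-1 / 2) by ring.
    rewrite ler_wpM2l //; lra.
  rewrite QD //; apply: leeD; apply: QZ_le => //.
rewrite !MpE.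
have fA := hfin l.+1; have fB := hfin l.-1; have fX := hfin l.
rewrite !MpE in fA fB fX.
have A0 : (0 <= Q F (wM (l.+1%:R / 2)%R))%E by apply: Q_ge0 => //; apply: gw.
have B0 : (0 <= Q F (wM (l.-1%:R / 2)%R))%E by apply: Q_ge0 => //; apply: gw.
have X0 : (0 <= Q F (wM (l%:R / 2)%R))%E by apply: Q_ge0 => //; apply: gw.
move: key fA fB fX A0 B0 X0.
generalize (Q F (wM (l%:R / 2))) as X.
generalize (Q F (wM (l.+1%:R / 2))) as A.
generalize (Q F (wM (l.-1%:R / 2))) as B.
case=> [b||] //; case=> [a||] //; case=> [x||] // key _ _ _ A0 B0 X0.
rewrite /= -EFinM lee_fin; apply: cs_real; rewrite -?lee_fin //.
Qed.
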